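(* Fix any $H\ge2$. For any offline algorithm $\mathrm{Algo}$ (mapping datasets to policies) and any coefficients $\{\kappa_h\}_{h\ge1}$ with $\kappa_h\ge2$, there exist a linear MDP $\mathcal{M}=(\mathcal{S},\mathcal{A},H,\mathbb{P},r,d_0)$ with positive minimum sub-optimality gap $\Delta_{\min}>0$ and a behavior policy $\mu$ generating a dataset $\mathcal{D}=\{(s_h^t,a_h^t,r_h^t)\}_{h\in[H]}^{t\in[K]}\sim\mathcal{P}(\cdot\mid\mathcal{M},\mu)$ with $\sup_{s_h,a_h}\frac{d^{\mathcal{M},*}_h(s_h,a_h)}{d^{\mathcal{M},\mu}_h(s_h,a_h)}\le\kappa_h$ for all $h\in[H]$, such that \[ \mathbb{E}_{\mathcal{D}\sim\mathcal{M}}[\mathrm{SubOpt}(\mathrm{Algo}(\mathcal{D});\mathcal{M})]=\Omega\Big(\frac{\kappa_{\min}H^2}{K\Delta_{\min}}\Big), \] where $\kappa_{\min}=\min\{\kappa_h:h\in[H]\}$.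
   Context: Episodic MDP with horizon $H$, initial distribution $d_0$, transitions $\mathbb{P}_h$, mean rewards $r_h\in[0,1]$. For a policy $\pi$, $V^\pi_h,Q^\pi_h$ are its value functions and $V^*,Q^*$ the optimal ones; $d^{\mathcal{M},\pi}_h(s,a)$ is the state-action visitation density at step $h$ under $\pi$ in $\mathcal{M}$, and $d^{\mathcal{M},*}_h$ that of an optimal policy. $\mathrm{SubOpt}(\pi;\mathcal{M})=\mathbb{E}_{s\sim d_0}[V^*_1(s)-V^\pi_1(s)]$. Linear MDP: there are known features $\phi_h:\mathcal{S}\times\mathcal{A}\to\mathbb{R}^d$, $\|\phi_h\|_2\le1$, with $r_h(s,a)=\phi_h(s,a)^T\theta_h$ and $\mathbb{P}_h(s'|s,a)=\phi_h(s,a)^T\mu_h(s')$. Sub-optimality gaps $\Delta_h(s,a)=V^*_h(s)-Q^*_h(s,a)$, $\Delta_{\min}=\min_{s,a,h}\{\Delta_h(s,a):\Delta_h(s,a)\neq0\}$. The dataset consists of $K$ episodes of trajectories generated by running $\mu$ in $\mathcal{M}$. *)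

(* Defs.v *)
From HB Require Import structures.
From mathcomp Require Import all_boot all_order all_algebra.
From mathcomp Require Import reals.
Set Implicit Arguments. Unset Strict Implicit. Unset Printing Implicit Defensive.
Import Order.TTheory GRing.Theory Num.Theory.
Local Open Scope ring_scope.

(* Steps are 0-indexed: step h of the paper is h+1 here, h < H. *)

Definition is_dist {R : realType} {T : finType} (p : T -> R) : Prop :=
  (forall x, 0 <= p x) /\ \sum_x p x = 1.

(* (possibly stochastic, non-stationary) policy: pi h s a = pi_h(a|s) *)
Definition policy (R : realType) (S A : finType) := nat -> S -> A -> R.

Definition is_policy {R : realType} {S A : finType} (H : nat) (pi : policy R S A) :=
  forall h, (h < H)%N -> forall s, is_dist (pi h s).

(* An episodic MDP with finitely-supported reward noise: observed reward at
   (h,s,a) is rval o with o ~ rdist h s a. *)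
Record mdp (R : realType) (S A O : finType) := Mdp {
  d0 : S -> R;
  trans : nat -> S -> A -> S -> R;   (* trans h s a s' = P_h(s'|s,a) *)
  rdist : nat -> S -> A -> O -> R;
  rval : O -> R }.

Definition rmean {R : realType} {S A O : finType} (M : mdp R S A O) h s a : R :=
  \sum_o rdist M h s a o * rval M o.

Definition is_mdp {R : realType} {S A O : finType} (H : nat) (M : mdp R S A O) :=
  [/\ is_dist (d0 M),
      (forall h, (h < H)%N -> forall s a, is_dist (trans M h s a)),
      (forall h, (h < H)%N -> forall s a, is_dist (rdist M h s a)) &
      (forall o, 0 <= rval M o <= 1)].

Definition dotv {R : realType} {d : nat} (x y : 'rV[R]_d) : R :=
  \sum_(i < d) x 0 i * y 0 i.

Definition is_linear_mdp {R : realType} {S A O : finType} (H d : nat)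
    (M : mdp R S A O) (phi : nat -> S -> A -> 'rV[R]_d) :=
  is_mdp H M /\
  (forall h, (h < H)%N -> forall s a, dotv (phi h s a) (phi h s a) <= 1) /\
  exists (theta : nat -> 'rV[R]_d) (mu : nat -> S -> 'rV[R]_d),
    forall h, (h < H)%N -> forall s a,
      rmean M h s a = dotv (phi h s a) (theta h) /\
      forall s', trans M h s a s' = dotv (phi h s a) (mu h s').

(* V^pi with n remaining steps starting at step h: V^pi_h = Vpi pi (H-h) h *)
Fixpoint Vpi {R : realType} {S A O : finType} (M : mdp R S A O)
    (pi : policy R S A) (n h : nat) (s : S) : R :=
  match n with
  | 0 => 0
  | n'.+1 => \sum_a pi h s a *
       (rmean M h s a + \sum_s' trans M h s a s' * Vpi M pi n' h.+1 s')
  end.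

(* Optimal values by backward induction (Bellman optimality).  The max is
   seeded with 0, which is harmless since mean rewards are >= 0. *)
Fixpoint Vstar {R : realType} {S A O : finType} (M : mdp R S A O)
    (n h : nat) (s : S) : R :=
  match n with
  | 0 => 0
  | n'.+1 => \big[Num.max/0]_a
       (rmean M h s a + \sum_s' trans M h s a s' * Vstar M n' h.+1 s')
  end.

Definition Qstar {R : realType} {S A O : finType} (M : mdp R S A O)
    (H h : nat) (s : S) (a : A) : R :=
  rmean M h s a + \sum_s' trans M h s a s' * Vstar M (H - h.+1) h.+1 s'.

Definition gap {R : realType} {S A O : finType} (M : mdp R S A O)
    (H h : nat) (s : S) (a : A) : R :=
  Vstar M (H - h) h s - Qstar M H h s a.

Definition is_min_gap {R : realType} {S A O : finType} (H : nat)
    (M : mdp R S A O) (Dmin : R) :=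
  (exists h s a, (h < H)%N /\ gap M H h s a != 0 /\ gap M H h s a = Dmin) /\
  (forall h s a, (h < H)%N -> gap M H h s a != 0 -> Dmin <= gap M H h s a).

Definition is_optimal {R : realType} {S A O : finType} (H : nat)
    (M : mdp R S A O) (pi : policy R S A) :=
  forall h, (h < H)%N -> forall s, Vpi M pi (H - h) h s = Vstar M (H - h) h s.

Fixpoint socc {R : realType} {S A O : finType} (M : mdp R S A O)
    (pi : policy R S A) (h : nat) (s' : S) : R :=
  match h with
  | 0 => d0 M s'
  | h'.+1 => \sum_s \sum_a socc M pi h' s * pi h' s a * trans M h' s a s'
  end.

Definition visit {R : realType} {S A O : finType} (M : mdp R S A O)
    (pi : policy R S A) (h : nat) (s : S) (a : A) : R :=
  socc M pi h s * pi h s a.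

Definition SubOpt {R : realType} {S A O : finType} (H : nat)
    (M : mdp R S A O) (pi : policy R S A) : R :=
  \sum_s d0 M s * (Vstar M H 0 s - Vpi M pi H 0 s).

Definition rawtraj (H : nat) (S A O : finType) := {ffun 'I_H -> S * A * O}.
Definition rawdata (K H : nat) (S A O : finType) := {ffun 'I_K -> rawtraj H S A O}.

(* the step before h (h itself when h = 0; only used for h > 0) *)
Definition prev_step {H : nat} (h : 'I_H) : 'I_H :=
  Ordinal (leq_ltn_trans (leq_pred h) (ltn_ord h)).

Definition traj_prob {R : realType} {S A O : finType} (H : nat)
    (M : mdp R S A O) (mu : policy R S A) (tau : rawtraj H S A O) : R :=
  \prod_(h < H)
    let: (s, a, o) := tau h in
    (if h == 0 :> nat then d0 M s
     else let: (sp, ap, _) := tau (prev_step h) in trans M h.-1 sp ap s)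
    * mu h s a * rdist M h s a o.

Definition data_prob {R : realType} {S A O : finType} (K H : nat)
    (M : mdp R S A O) (mu : policy R S A) (D : rawdata K H S A O) : R :=
  \prod_(t < K) traj_prob M mu (D t).

Definition dataset (R : realType) (K H : nat) (S A : Type) :=
  'I_K -> 'I_H -> S * A * R.

Definition observe {R : realType} {S A O : finType} {K H : nat}
    (M : mdp R S A O) (D : rawdata K H S A O) : dataset R K H S A :=
  fun t h => let: (s, a, o) := D t h in (s, a, rval M o).

Definition algo (R : realType) (K H : nat) :=
  forall (nS nA d : nat), (nat -> 'I_nS -> 'I_nA -> 'rV[R]_d) ->
    dataset R K H 'I_nS 'I_nA -> policy R 'I_nS 'I_nA.

Definition valid_algo {R : realType} {K H : nat} (Alg : algo R K H) :=
  forall nS nA d phi D, is_policy H (@Alg nS nA d phi D).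

Definition expected_subopt {R : realType} {nS nA : nat} {O : finType} {d K H : nat}
    (Alg : algo R K H) (M : mdp R 'I_nS 'I_nA O)
    (phi : nat -> 'I_nS -> 'I_nA -> 'rV[R]_d) (mu : policy R 'I_nS 'I_nA) : R :=
  \sum_(D : rawdata K H 'I_nS 'I_nA O)
     data_prob M mu D * SubOpt H M (@Alg nS nA d phi (observe M D)).

Definition kappa_min {R : realType} (H : nat) (kappa : nat -> R) : R :=
  \big[Num.min/kappa 0%N]_(h < H) kappa h.

(* Main.v *)
Require Import Defs.
From HB Require Import structures.
From mathcomp Require Import all_boot all_order all_algebra.
From mathcomp Require Import reals.
From mathcomp Require Import ring lra zify.
Set Implicit Arguments. Unset Strict Implicit. Unset Printing Implicit Defensive.
Import Order.TTheory GRing.Theory Num.Theory.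
Local Open Scope ring_scope.

Lemma le_bmax (R : realType) (I : finType) (F : I -> R) j :
  F j <= \big[Num.max/0]_i F i.
Proof. exact: le_bigmax. Qed.

Lemma bmax_le (R : realType) (I : finType) (F : I -> R) (c : R) :
  0 <= c -> (forall i, F i <= c) -> \big[Num.max/0]_i F i <= c.
Proof.
move=> c0 Fc; elim/big_ind: _ => // x y hx hy.
by rewrite ge_max hx hy.
Qed.

Lemma sum_conv (R : realType) (I : finType) (p F : I -> R) (c : R) :
  (forall i, 0 <= p i) -> \sum_i p i = 1 -> (forall i, F i <= c) ->
  \sum_i p i * F i <= c.
Proof.
move=> p0 p1 Fc.
apply: (@le_trans _ _ (\sum_i p i * c)).
  by apply: ler_sum => i _; apply: ler_wpM2l.
by rewrite -mulr_suml p1 mul1r.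
Qed.

Lemma Vpi_le_Vstar (R : realType) (S A O : finType) (H : nat) (M : mdp R S A O) pi :
  is_mdp H M -> is_policy H pi ->
  forall n h s, (h + n <= H)%N -> Vpi M pi n h s <= Vstar M n h s.
Proof.
case=> _ Htr _ _ Hpi; elim=> [|n IH] h s hn /=; first by [].
have hH : (h < H)%N by move: hn; rewrite addnS => /(leq_trans _); apply; rewrite ltnS leq_addr.
have [p0 p1] := Hpi h hH s.
apply: sum_conv => // a.
apply: (le_trans _ (le_bmax _ a)).
rewrite lerD2l; apply: ler_sum => s' _.
have [t0 _] := Htr h hH s a.
apply: ler_wpM2l => //; apply: IH; by rewrite addSnnS.
Qed.
Lemma Vstar_S_ge (R : realType) (S A O : finType) (M : mdp R S A O) n h s a :
  rmean M h s a + \sum_s' trans M h s a s' * Vstar M n h.+1 s' <= Vstar M n.+1 h s.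
Proof. exact: (le_bmax (fun a => _) a). Qed.

Lemma gap_ge0 (R : realType) (S A O : finType) (H : nat) (M : mdp R S A O) h s a :
  (h < H)%N -> 0 <= gap M H h s a.
Proof.
move=> hH; rewrite /gap /Qstar subr_ge0.
have -> : (H - h = (H - h.+1).+1)%N by rewrite subnS prednK // subn_gt0.
exact: Vstar_S_ge.
Qed.

Lemma subopt_step (R : realType) (S A O : finType) (H : nat) (M : mdp R S A O) pi :
  is_mdp H M -> is_policy H pi -> forall h s, (h < H)%N ->
  \sum_a pi h s a * gap M H h s a <= Vstar M (H - h) h s - Vpi M pi (H - h) h s.
Proof.
move=> HM Hpi h s hH.
have [p0 p1] := Hpi h hH s.
have HMc := HM; case: HMc => _ Htr _ _.
have e : (H - h = (H - h.+1).+1)%N by rewrite subnS prednK // subn_gt0.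
have -> : \sum_a pi h s a * gap M H h s a =
          Vstar M (H - h) h s - \sum_a pi h s a * Qstar M H h s a.
  rewrite /gap; under eq_bigr do rewrite mulrBr.
  by rewrite sumrB -mulr_suml p1 mul1r.
rewrite lerD2l lerN2 {1}e /=.
apply: ler_sum => a _; apply: ler_wpM2l => //.
rewrite /Qstar lerD2l; apply: ler_sum => s' _.
have [t0 _] := Htr h hH s a.
apply: ler_wpM2l => //; apply: (Vpi_le_Vstar HM Hpi).
by rewrite addnC subnK.
Qed.

Lemma optimal_zero (R : realType) (S A O : finType) (H : nat) (M : mdp R S A O) pi :
  is_mdp H M -> is_policy H pi -> is_optimal H M pi ->
  forall h s a, (h < H)%N -> gap M H h s a != 0 -> pi h s a = 0.
Proof.
move=> HM Hpi Hopt h s a hH g0.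
have := subopt_step HM Hpi s hH; rewrite Hopt // subrr => hle.
have [p0 p1] := Hpi h hH s.
have hz : \sum_a pi h s a * gap M H h s a = 0.
  apply/eqP; rewrite eq_le hle /=; apply: sumr_ge0 => b _.
  by apply: mulr_ge0 => //; apply: gap_ge0.
have /psumr_eq0P := hz => /(_ (fun b _ => mulr_ge0 (p0 b) (gap_ge0 M s b hH))) /(_ a isT).
by move/eqP; rewrite mulf_eq0 (negbTE g0) orbF => /eqP.
Qed.
Lemma sum_pt (R : realType) (I : finType) (t : I) (F : I -> R) :
  \sum_i (i == t)%:R * F i = F t.
Proof.
rewrite (bigD1 t) //= eqxx mul1r big1 ?addr0 // => i /negbTE ->; by rewrite mul0r.
Qed.

Definition onehot (R : realType) (S A : finType) (h : nat) (s : S) (a : A) : 'rV[R]_#|{: S * A}| :=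
  \row_j ((j == enum_rank (s, a))%:R).

Lemma tabular_linear (R : realType) (S A O : finType) (H : nat) (M : mdp R S A O) :
  is_mdp H M -> is_linear_mdp H M (@onehot R S A).
Proof.
move=> HM; split=> //; split.
  move=> h _ s a; rewrite /dotv /onehot.
  under eq_bigr do rewrite !mxE.
  by rewrite (sum_pt _ (fun j => (j == enum_rank (s, a))%:R)) eqxx.
exists (fun h => \row_j rmean M h (enum_val j).1 (enum_val j).2).
exists (fun h s' => \row_j trans M h (enum_val j).1 (enum_val j).2 s').
move=> h _ s a; split; last move=> s';
  rewrite /dotv /onehot; under eq_bigr do rewrite !mxE;
  by rewrite sum_pt enum_rankK.
Qed.
Definition fext (X : finType) n (sg : {ffun 'I_n.+1 -> X}) (x : X) : {ffun 'I_n.+2 -> X} :=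
  [ffun i => if unlift ord_max i is Some j then sg j else x].

Lemma widen_lift n (i : 'I_n.+1) : widen_ord (leqnSn _) i = lift ord_max i.
Proof. by apply: val_inj; rewrite /= /bump leqNgt ltn_ord. Qed.

Lemma fext_widen (X : finType) n (sg : {ffun 'I_n.+1 -> X}) x i :
  fext sg x (widen_ord (leqnSn _) i) = sg i.
Proof. by rewrite widen_lift /fext ffunE liftK. Qed.

Lemma fext_max (X : finType) n (sg : {ffun 'I_n.+1 -> X}) x : fext sg x ord_max = x.
Proof. by rewrite /fext ffunE unlift_none. Qed.

Lemma sum_fext (R : realType) (X : finType) n (G : {ffun 'I_n.+2 -> X} -> R) :
  \sum_tau G tau = \sum_sg \sum_x G (fext sg x).
Proof.
rewrite pair_bigA /=.
rewrite (reindex (fun p : {ffun 'I_n.+1 -> X} * X => fext p.1 p.2)) //=.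
exists (fun tau => ([ffun j => tau (widen_ord (leqnSn _) j)], tau ord_max)).
  move=> [sg x] _ /=; congr pair; last exact: fext_max.
  by apply/ffunP => j; rewrite ffunE fext_widen.
move=> tau _ /=; apply/ffunP => i; rewrite /fext ffunE.
by case: unliftP => [j ->|->] //; rewrite ffunE widen_lift.
Qed.

Lemma prev_widen n (i : 'I_n.+1) :
  prev_step (widen_ord (leqnSn n.+1) i) = widen_ord (leqnSn _) (prev_step i).
Proof. by apply: val_inj. Qed.

Lemma chain_sum (R : realType) (X : finType) (n : nat) (p0 : X -> R) (k : nat -> X -> X -> R) :
  (forall i x, (i < n)%N -> \sum_y k i x y = 1) ->
  \sum_(tau : {ffun 'I_n.+1 -> X})
     \prod_(i < n.+1) (if (i == 0 :> nat) then p0 (tau i)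
                       else k i.-1 (tau (prev_step i)) (tau i)) = \sum_x p0 x.
Proof.
elim: n => [|n IH] Hk.
  rewrite (reindex (fun x : X => [ffun => x])) /=; last first.
    exists (fun tau : {ffun 'I_1 -> X} => tau ord0) => [x _|tau _]; first by rewrite ffunE.
    apply/ffunP => i; rewrite ffunE; congr (tau _); by apply: val_inj; case: i => [[]].
  by apply: eq_bigr => x _; rewrite big_ord1 /= ffunE.
rewrite sum_fext -IH; last by move=> i x hi; apply: Hk; apply: ltnW.
apply: eq_bigr => sg _.
under eq_bigr do rewrite big_ord_recr /=.
have -> : prev_step (@ord_max n.+1) = widen_ord (leqnSn _) (@ord_max n) by apply: val_inj.
under eq_bigr => x _.
  rewrite fext_max fext_widen.
  under eq_bigr => i _ do rewrite prev_widen !fext_widen.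
  over.
by rewrite -mulr_sumr Hk // mulr1.
Qed.
Definition sE : 'I_5 := @Ordinal 5 0 isT.
Definition sT1 : 'I_5 := @Ordinal 5 1 isT.
Definition sT0 : 'I_5 := @Ordinal 5 2 isT.
Definition sX : 'I_5 := @Ordinal 5 3 isT.
Definition sR : 'I_5 := @Ordinal 5 4 isT.
Definition c0 : 'I_3 := @Ordinal 3 0 isT.
Definition c1 : 'I_3 := @Ordinal 3 1 isT.
Definition c2 : 'I_3 := @Ordinal 3 2 isT.

Definition nxt (m : bool) (L h : nat) (s : 'I_5) (x : 'I_2) : 'I_5 :=
  match val s with
  | 0 => if (h <= L)%N && (val x == 1%N) then sX else sE
  | 1 => if (h <= L)%N then (if val x == 0%N then (if (h < L)%N then sT1 else sE) else sX) else sE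
  | 2 => if (h <= L)%N then (if val x == 0%N then (if (h < L)%N then sT0 else sE) else sX) else sE
  | 3 => sX
  | _ => if h == 0%N then (if val x == 0%N then (if L == 0%N then sE else if m then sT1 else sT0) else sE) else sE
  end.

Definition rc (m : bool) (L h : nat) (s : 'I_5) (x : 'I_2) : 'I_3 :=
  match val s with
  | 0 => if (h <= L)%N && (val x == 1%N) then c0 else c1
  | 1 => if (h <= L)%N then (if val x == 0%N then c2 else c0) else c1
  | 2 => if (h <= L)%N then c0 else c1
  | 3 => c0
  | _ => if h == 0%N then (if val x == 0%N then (if m then c2 else c0) else c1) else c1
  end.

Definition rvalf (R : realType) (o : 'I_3) : R := (val o)%:R / 2.

Definition d0q (R : realType) (q : R) (s : 'I_5) : R :=
  if val s == 0%N then 1 - q else if val s == 4%N then q else 0.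

Definition MM (R : realType) (m : bool) (L : nat) (q : R) : mdp R 'I_5 'I_2 'I_3 :=
  Mdp (d0q q) (fun h s x s' => (s' == nxt m L h s x)%:R)
      (fun h s x o => (o == rc m L h s x)%:R) (@rvalf R).

Lemma rmeanE (R : realType) m L (q : R) h s x : rmean (MM m L q) h s x = rvalf R (rc m L h s x).
Proof. by rewrite /rmean /= sum_pt. Qed.

Lemma Qsum (R : realType) m L (q : R) h s x (V : 'I_5 -> R) :
  \sum_s' trans (MM m L q) h s x s' * V s' = V (nxt m L h s x).
Proof. by rewrite /= sum_pt. Qed.

Definition w (R : realType) (m : bool) (L H h : nat) (s : 'I_5) : R :=
  match val s with
  | 0 => (H%:R - h%:R) / 2
  | 1 => if (h <= L)%N then (L%:R + 1 - h%:R) + (H%:R - 1 - L%:R) / 2 else (H%:R - h%:R) / 2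
  | 2 => if (h <= L)%N then (H%:R - 1 - L%:R) / 2 else (H%:R - h%:R) / 2
  | 3 => 0
  | _ => if h == 0%N then (if m then 1 + L%:R + (H%:R - 1 - L%:R) / 2 else H%:R / 2)
         else (H%:R - h%:R) / 2
  end.

Lemma max2E (R : realType) (F : 'I_2 -> R) :
  \big[Num.max/0]_(x < 2) F x = Num.max (F ord0) (Num.max (F (lift ord0 ord0)) 0).
Proof. by rewrite !big_ord_recl big_ord0. Qed.

Lemma maxA' (R : realType) (A B c : R) : 0 <= A -> B <= A -> A = c -> Num.max A (Num.max B 0) = c.
Proof.
move=> hA hB <-; have: Num.max B 0 <= A by rewrite ge_max hA hB.
by move/max_idPl.
Qed.
Lemma maxB' (R : realType) (A B c : R) : 0 <= B -> A <= B -> B = c -> Num.max A (Num.max B 0) = c.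
Proof. by move=> hB hAB <-; rewrite (max_idPl hB) (max_idPr hAB). Qed.

Lemma VstarS (R : realType) (S A O : finType) (M : mdp R S A O) n h s :
  Vstar M n.+1 h s = \big[Num.max/0]_a
       (rmean M h s a + \sum_s' trans M h s a s' * Vstar M n h.+1 s').
Proof. by []. Qed.

Lemma Vstar_w (R : realType) m L (q : R) H :
  (2 * L + 2 <= H)%N ->
  forall n h s, (h + n = H)%N -> Vstar (MM m L q) n h s = w R m L H h s.
Proof.
move=> hLH; elim=> [|n IH] h s hn.
  rewrite addn0 in hn; subst h.
  have hL : (H <= L)%N = false by apply/negbTE; rewrite -ltnNge; lia.
  case: s => [[|[|[|[|[|?]]]]] Hs] //=; rewrite /w /= ?hL ?subrr ?mul0r //.
  by have -> : (H == 0%N) = false by apply/eqP; lia.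
rewrite VstarS max2E.
have hn' : (h.+1 + n = H)%N by rewrite addSnnS.
rewrite !rmeanE !Qsum !IH //.
have hH : (h%:R + 1 <= H%:R :> R) by rewrite natr1 ler_nat; lia.
have hL2 : (2 * L%:R + 2 <= H%:R :> R) by rewrite -[2 * _]natrM -[_ + 2]natrD ler_nat.
have hL0 : (0 <= L%:R :> R) by [].
have h0 : (0 <= h%:R :> R) by [].
rewrite /rvalf /w /nxt /rc -[h.+1%:R]natr1.
have [hl|hl|hl] := ltngtP h L.
{ have hl1 : (h <= L)%N by apply: ltnW.
  have hl' : (h%:R + 1 <= L%:R :> R) by rewrite natr1 ler_nat.
  case: s => [[|[|[|[|[|?]]]]] Hs] //=; rewrite ?hl1 ?hl /=;
  try (first [apply: maxA'; lra | apply: maxB'; lra]).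
  have -> : (L == 0%N) = false by apply/eqP; lia.
  case: (h =P 0%N) => [e|e] /=; last by (first [apply: maxA'; lra | apply: maxB'; lra]).
  subst h. clear IH; case: m => /=; rewrite ?hl /=; (first [apply: maxA'; lra | apply: maxB'; lra]).
}
{ have hl1 : (h <= L)%N = false by apply/negbTE; rewrite -ltnNge.
  have hl2 : (h < L)%N = false by apply/negbTE; rewrite -leqNgt ltnW.
  have hl3 : (h.+1 <= L)%N = false by [].
  have hl' : (L%:R + 1 <= h%:R :> R) by rewrite natr1 ler_nat.
  have hh : (h == 0%N) = false by apply/eqP; lia.
  case: s => [[|[|[|[|[|?]]]]] Hs] //=; rewrite ?hl1 ?hl2 ?hl3 ?hh /=;
  try (first [apply: maxA'; lra | apply: maxB'; lra]).
}
{ subst h.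
  have hl1 : (L < L)%N = false by rewrite ltnn.
  case: s => [[|[|[|[|[|?]]]]] Hs] //=; rewrite ?leqnn ?hl1 ?ltnn /=;
  try (first [apply: maxA'; lra | apply: maxB'; lra]).
  clear IH; case: (L =P 0%N) => [e|e] /=.
    rewrite e /= in hH hL2 *; case: m => /=; (first [apply: maxA'; lra | apply: maxB'; lra]).
  (first [apply: maxA'; lra | apply: maxB'; lra]).
}
Qed.

Lemma gapE (R : realType) m L (q : R) H h s x :
  (2 * L + 2 <= H)%N -> (h < H)%N ->
  gap (MM m L q) H h s x =
  w R m L H h s - (rvalf R (rc m L h s x) + w R m L H h.+1 (nxt m L h s x)).
Proof.
move=> hLH hH; rewrite /gap /Qstar rmeanE Qsum !(@Vstar_w R m L q H hLH) //.
  by rewrite addnC subnK.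
by rewrite addnC subnK // ltnW.
Qed.

Ltac gsolve := first [left; lra | right; lra].

Lemma gap_cases (R : realType) m L (q : R) H h s x :
  (2 * L + 2 <= H)%N -> (h < H)%N ->
  gap (MM m L q) H h s x = 0 \/ (L%:R + 1) / 2 <= gap (MM m L q) H h s x.
Proof.
move=> hLH hHh; rewrite gapE //.
have hH : (h%:R + 1 <= H%:R :> R) by rewrite natr1 ler_nat; lia.
have hL2 : (2 * L%:R + 2 <= H%:R :> R) by rewrite -[2 * _]natrM -[_ + 2]natrD ler_nat.
have hL0 : (0 <= L%:R :> R) by [].
have h0 : (0 <= h%:R :> R) by [].
rewrite /rvalf /w /nxt /rc -[h.+1%:R]natr1.
have [hl|hl|hl] := ltngtP h L.
{ have hl1 : (h <= L)%N by apply: ltnW.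
  have hl' : (h%:R + 1 <= L%:R :> R) by rewrite natr1 ler_nat.
  case: s => [[|[|[|[|[|?]]]]] Hs] //=; rewrite ?hl1 ?hl /=;
  case: x => [[|[|?]] Hx] //=; rewrite ?hl1 ?hl /=; try gsolve.
  all: have hL0' : (L == 0%N) = false by apply/eqP; lia.
  all: rewrite ?hL0'.
  all: case: (h =P 0%N) => [e|e] /=; try gsolve.
  all: subst h; case: m => /=; rewrite ?hl /=; gsolve.
}
{ have hl1 : (h <= L)%N = false by apply/negbTE; rewrite -ltnNge.
  have hl2 : (h < L)%N = false by apply/negbTE; rewrite -leqNgt ltnW.
  have hl3 : (h.+1 <= L)%N = false by [].
  have hl' : (L%:R + 1 <= h%:R :> R) by rewrite natr1 ler_nat.
  have hh : (h == 0%N) = false by apply/eqP; lia.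
  case: s => [[|[|[|[|[|?]]]]] Hs] //=; rewrite ?hl1 ?hl2 ?hl3 ?hh /=;
  case: x => [[|[|?]] Hx] //=; rewrite ?hl1 ?hl2 ?hl3 ?hh /=; try gsolve.
}
{ subst h.
  have hl1 : (L < L)%N = false by rewrite ltnn.
  case: s => [[|[|[|[|[|?]]]]] Hs] //=; rewrite ?leqnn ?hl1 ?ltnn /=;
  case: x => [[|[|?]] Hx] //=; rewrite ?leqnn ?hl1 ?ltnn /=; try gsolve.
  all: case: (L =P 0%N) => [e|e] /=; try gsolve.
  all: rewrite e /= in hH hL2 *; case: m => /=; gsolve.
}
Qed.

Lemma gap_R (R : realType) m L (q : R) H x :
  (2 * L + 2 <= H)%N ->
  gap (MM m L q) H 0 sR x = if (val x == 0%N) == m then 0 else (L%:R + 1) / 2.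
Proof.
move=> hLH; rewrite gapE //; last lia.
have hL2 : (2 * L%:R + 2 <= H%:R :> R) by rewrite -[2 * _]natrM -[_ + 2]natrD ler_nat.
have hL0 : (0 <= L%:R :> R) by [].
rewrite /rvalf /w /nxt /rc /=.
case: x => [[|[|?]] Hx] //=; case: (L =P 0%N) => [e|e] /=; try rewrite e /= in hL2 *;
 case: m => /=; try lra.
all: have -> : (0 < L)%N by lia.
all: rewrite /=; lra.
Qed.

Definition a0 : 'I_2 := @Ordinal 2 0 isT.
Definition a1 : 'I_2 := @Ordinal 2 1 isT.

Lemma sum5 (R : realType) (F : 'I_5 -> R) :
  \sum_(s < 5) F s = F sE + F sT1 + F sT0 + F sX + F sR.
Proof.
rewrite !big_ord_recl big_ord0 addr0 !addrA.
by congr (_ + _ + _ + _ + _); congr F; apply: val_inj.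
Qed.

Lemma sum2 (R : realType) (F : 'I_2 -> R) : \sum_(x < 2) F x = F a0 + F a1.
Proof.
rewrite !big_ord_recl big_ord0 addr0.
by congr (_ + _); congr F; apply: val_inj.
Qed.

Definition occ (R : realType) (m : bool) (L : nat) (q b : R) (h : nat) (s : 'I_5) : R :=
  if h == 0%N then d0q q s else
  if (h <= L)%N then
    match val s with 0 => 1 - q * b | 1 => if m then q * b else 0
                   | 2 => if m then 0 else q * b | _ => 0 end
  else (if val s == 0%N then 1 else 0).

Lemma soccS (R : realType) (S A O : finType) (M : mdp R S A O) p h s' :
  socc M p h.+1 s' = \sum_s \sum_a socc M p h s * p h s a * trans M h s a s'.
Proof. by []. Qed.

Lemma ord5P (P : 'I_5 -> Prop) : P sE -> P sT1 -> P sT0 -> P sX -> P sR -> forall s, P s.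
Proof.
move=> h0 h1 h2 h3 h4 [[|[|[|[|[|?]]]]] Hs] //.
- by rewrite (_ : Ordinal Hs = sE) //; apply: val_inj.
- by rewrite (_ : Ordinal Hs = sT1) //; apply: val_inj.
- by rewrite (_ : Ordinal Hs = sT0) //; apply: val_inj.
- by rewrite (_ : Ordinal Hs = sX) //; apply: val_inj.
- by rewrite (_ : Ordinal Hs = sR) //; apply: val_inj.
Qed.

Lemma socc_occ (R : realType) m L (q : R) H (p : policy R 'I_5 'I_2) :
  (2 * L + 2 <= H)%N -> is_policy H p ->
  (forall h, (h <= L)%N -> p h sE a1 = 0 /\ p h sT1 a1 = 0 /\ p h sT0 a1 = 0) ->
  forall h, (h < H)%N -> forall s, socc (MM m L q) p h s = occ m L q (p 0%N sR a0) h s.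
Proof.
move=> hLH Hp Hdev; elim=> [|h IH] hH s; first by [].
have hH' : (h < H)%N by apply: ltnW.
rewrite soccS sum5 !sum2 !IH //= /nxt /occ /=.
have hs : forall s, p h s a0 + p h s a1 = 1.
  by move=> s0; have [_ <-] := Hp h hH' s0; rewrite sum2.
set b := p 0%N sR a0.
have [hl|hl|hl] := ltngtP h L.
{ have hl1 : (h <= L)%N by apply: ltnW.
  have [d1 [d2 d3]] := Hdev h hl1.
  have e1 : p h sE a0 = 1 by rewrite -(hs sE) d1 addr0.
  have e2 : p h sT1 a0 = 1 by rewrite -(hs sT1) d2 addr0.
  have e3 : p h sT0 a0 = 1 by rewrite -(hs sT0) d3 addr0.
  rewrite d1 d2 d3 e1 e2 e3.
  case: (h =P 0%N) => [e|e].
    subst h. clear IH. rewrite /b; have := hs sR. rewrite /d0q /=.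
    have -> : (L == 0%N) = false by apply/eqP; lia.
    move: s; apply: ord5P => /=; case: m => /=; move=> hR; rewrite ?mul0r ?mulr0 ?mulr1 ?mul1r ?addr0 ?add0r; try lra;
    rewrite (_ : p 0%N sR a1 = 1 - p 0%N sR a0); lra.
  clear IH; rewrite /=; move: s; apply: ord5P => /=; case: m => /=; rewrite ?mul0r ?mulr0 ?mulr1 ?mul1r; try lra.
}
{ have hh : (h == 0%N) = false by apply/eqP; lia.
  clear IH; rewrite hh; move: s; apply: ord5P => /=; rewrite ?mul0r ?mulr0 ?mulr1 ?mul1r ?addr0 ?add0r;
  try lra; have := hs sE; lra. }
{ subst h.
  have [d1 [d2 d3]] := Hdev L (leqnn L).
  have e1 : p L sE a0 = 1 by rewrite -(hs sE) d1 addr0.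
  have e2 : p L sT1 a0 = 1 by rewrite -(hs sT1) d2 addr0.
  have e3 : p L sT0 a0 = 1 by rewrite -(hs sT0) d3 addr0.
  rewrite d1 d2 d3 e1 e2 e3.
  clear IH; case: (L =P 0%N) => [e|e].
    rewrite e /= in hs d1 d2 d3 e1 e2 e3 b *; rewrite /d0q /=.
    have := hs sR.
    move: s; apply: ord5P => /=; rewrite ?mul0r ?mulr0 ?mulr1 ?mul1r ?addr0 ?add0r; try lra;
    move=> hR; rewrite (_ : p 0%N sR a1 = 1 - p 0%N sR a0); lra.
  have hh : (L == 0%N) = false by apply/eqP.
  move: s; apply: ord5P => /=; case: m => /=;
  rewrite ?mul0r ?mulr0 ?mulr1 ?mul1r ?addr0 ?add0r; lra. }
Qed.

Lemma sum_pair (R : realType) (I J : finType) (F : I * J -> R) :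
  \sum_p F p = \sum_i \sum_j F (i, j).
Proof. by rewrite pair_bigA; apply: eq_bigr => -[]. Qed.

Definition p0f (R : realType) (S A O : finType) (M : mdp R S A O) (mu : policy R S A)
  (x : S * A * O) : R := d0 M x.1.1 * mu 0%N x.1.1 x.1.2 * rdist M 0%N x.1.1 x.1.2 x.2.
Definition kf (R : realType) (S A O : finType) (M : mdp R S A O) (mu : policy R S A)
  (i : nat) (y x : S * A * O) : R :=
  trans M i y.1.1 y.1.2 x.1.1 * mu i.+1 x.1.1 x.1.2 * rdist M i.+1 x.1.1 x.1.2 x.2.

Lemma traj_chain (R : realType) (S A O : finType) n (M : mdp R S A O) mu (tau : rawtraj n.+1 S A O) :
  traj_prob M mu tau = \prod_(i < n.+1) (if i == 0 :> nat then p0f M mu (tau i)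
                         else kf M mu i.-1 (tau (prev_step i)) (tau i)).
Proof.
apply: eq_bigr => i _.
case: (tau i) => [[s a] o]; case: (tau (prev_step i)) => [[sp ap] op] /=.
rewrite /p0f /kf /=; case: eqP => [->|e] //.
by rewrite prednK // lt0n; apply/eqP.
Qed.

Lemma kf_row (R : realType) (S A O : finType) n (M : mdp R S A O) mu i x :
  is_mdp n.+1 M -> is_policy n.+1 mu -> (i < n)%N -> \sum_y kf M mu i x y = 1.
Proof.
case=> _ Htr Hrd _ Hmu hi.
rewrite (sum_pair (fun y : S * A * O => kf M mu i x y)) /=.
rewrite (sum_pair (fun sa : S * A => \sum_j kf M mu i x (sa, j))) /=.
have [_ e1] := Htr i (ltnW hi) x.1.1 x.1.2.
apply: eq_trans e1; apply: eq_bigr => s _ /=.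
have [_ e2] := Hmu i.+1 hi s.
rewrite -[RHS]mulr1 -e2 mulr_sumr; apply: eq_bigr => a _ /=.
have [_ e] := Hrd i.+1 hi s a.
by rewrite /kf /= -!mulr_sumr e mulr1.
Qed.

Lemma traj_sum (R : realType) (S A O : finType) n (M : mdp R S A O) mu (g : S * A * O -> R) :
  is_mdp n.+1 M -> is_policy n.+1 mu ->
  \sum_(tau : rawtraj n.+1 S A O) g (tau ord0) * traj_prob M mu tau = \sum_x g x * p0f M mu x.
Proof.
move=> HM Hmu.
rewrite -(@chain_sum R _ n (fun x => g x * p0f M mu x) (kf M mu)); last first.
  by move=> i x hi; apply: (kf_row _ HM Hmu hi).
apply: eq_bigr => tau _; rewrite traj_chain !big_ord_recl /= mulrA; congr (_ * _).

Qed.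

Definition mupol (R : realType) (k : R) (L : nat) : policy R 'I_5 'I_2 := fun h s x =>
  if (h == 0%N) && (val s == 4%N) then (if val x == 0%N then k^-1 else 1 - k^-1)
  else if (h <= L)%N && (val s <= 2)%N then (if val x == 0%N then 1 else 0) else 1 / 2.

Lemma mupol_valid (R : realType) (k : R) L H : 2 <= k -> is_policy H (mupol k L).
Proof.
move=> k2 h _ s.
have ki : 0 < k^-1 <= 1/2.
  rewrite invr_gt0 (lt_le_trans _ k2) //=.
  rewrite -[1/2]invf_div divr1 lef_pV2 ?posrE //; lra.
split; last by rewrite sum2 /mupol /=; case: ifP => _; [|case: ifP => _]; lra.
move=> x; rewrite /mupol; case: ifP => _; [case: ifP => _|case: ifP => _; [case: ifP => _|]]; lra.
Qed.

Lemma pt_dist (R : realType) (I : finType) (t : I) : is_dist (fun i => (i == t)%:R : R).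
Proof.
split=> [i|]; first by rewrite ler0n.
rewrite (eq_bigr (fun i => (i == t)%:R * (fun=> 1 : R) i)); first by rewrite sum_pt.
by move=> i _; rewrite mulr1.
Qed.

Lemma MM_mdp (R : realType) m L (q : R) H : 0 <= q <= 1 -> is_mdp H (MM m L q).
Proof.
move=> /andP [q0 q1]; split.
- split; last by rewrite /= sum5 /d0q /=; lra.
  by move=> s; rewrite /= /d0q; case: ifP => _; [|case: ifP => _]; lra.
- by move=> *; apply: pt_dist.
- by move=> *; apply: pt_dist.
- move=> [[|[|[|?]]] Ho] //=; rewrite /rvalf /=; try lra.
Qed.

Lemma bernoulli_ineq (R : realType) (x : R) n : 0 <= x <= 1 -> 1 - n%:R * x <= (1 - x) ^+ n.
Proof.
move=> /andP [x0 x1]; elim: n => [|n IH]; first by rewrite expr0 mul0r subr0.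
rewrite exprS -natr1.
have y0 : 0 <= (1 - x) ^+ n by apply: exprn_ge0; lra.
have n0 : 0 <= n%:R :> R by [].
nra.
Qed.

Lemma gap_dev_pos (R : realType) m L (q : R) H h s :
  (2 * L + 2 <= H)%N -> (h <= L)%N -> (val s <= 2)%N -> gap (MM m L q) H h s a1 != 0.
Proof.
move=> hLH hl hs; rewrite gapE //; last lia.
have hH : (h%:R + 1 <= H%:R :> R) by rewrite natr1 ler_nat; lia.
have hL2 : (2 * L%:R + 2 <= H%:R :> R) by rewrite -[2 * _]natrM -[_ + 2]natrD ler_nat.
have hl' : (h%:R <= L%:R :> R) by rewrite ler_nat.
have h0 : (0 <= h%:R :> R) by [].
rewrite /rvalf /w /nxt /rc -[h.+1%:R]natr1.
move: s hs; apply: ord5P => //= _; rewrite ?hl /=; apply/eqP;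
case: (ltngtP h L) hl => // hl _; try lra.
all: subst h; lra.
Qed.

Lemma ord2P (P : 'I_2 -> Prop) : P a0 -> P a1 -> forall x, P x.
Proof.
move=> h0 h1 [[|[|?]] Hs] //.
- by rewrite (_ : Ordinal Hs = a0) //; apply: val_inj.
- by rewrite (_ : Ordinal Hs = a1) //; apply: val_inj.
Qed.

Lemma pol01 (R : realType) H (p : policy R 'I_5 'I_2) h s x :
  is_policy H p -> (h < H)%N -> 0 <= p h s x <= 1.
Proof.
move=> Hp hH; have [p0 p1] := Hp h hH s.
have := p0 a0; have := p0 a1; rewrite sum2 in p1.
by move: x; apply: ord2P => /= *; lra.
Qed.

Lemma helpA (R : realType) (a y z : R) : 0 <= a <= 1 -> 0 <= y <= 1 -> 1 <= z -> a * y <= z.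
Proof. move=> *; nra. Qed.
Lemma helpB (R : realType) (q b y kp ki : R) :
  0 <= q -> 0 <= b <= 1 -> 0 <= y <= 1 -> 1 <= kp * ki -> q * b * y <= kp * (q * ki).
Proof.
move=> q0 hb hy hk.
have h0 : 0 <= b * y <= 1 by nra.
have h1 : q * b * y <= q by rewrite -mulrA; nra.
have : q <= kp * (q * ki) by rewrite mulrCA; nra.
lra.
Qed.

Lemma helpC (R : realType) (q ki : R) : 0 <= q -> 0 <= ki <= 1 -> q * ki <= q.
Proof. move=> *; nra. Qed.
Lemma helpD (R : realType) (a y z : R) : 0 <= a -> y <= 1 -> 1 <= z -> a * y <= z * a.
Proof. move=> *; nra. Qed.
Lemma helpE (R : realType) (kp ki : R) : 2 <= kp -> ki <= 1/2 -> 1 <= kp * (1 - ki).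
Proof. move=> *; nra. Qed.
Lemma helpF (R : realType) (q b : R) : 0 <= q <= 1 -> 0 <= b <= 1 -> 0 <= 1 - q * b <= 1.
Proof. move=> *; nra. Qed.

Lemma kappa_check (R : realType) m L (q : R) H (k : R) (kap : nat -> R)
    (pi : policy R 'I_5 'I_2) :
  (2 * L + 2 <= H)%N -> 2 <= k -> (forall h, (h < H)%N -> k <= kap h) ->
  0 <= q -> q * k^-1 <= 1/2 -> q <= 1 ->
  is_policy H pi -> is_optimal H (MM m L q) pi ->
  forall h, (h < H)%N -> forall s x,
    visit (MM m L q) pi h s x <= kap h * visit (MM m L q) (mupol k L) h s x.
Proof.
move=> hLH k2 hk q0 qk q1 Hp Hopt.
have HM : is_mdp H (MM m L q) by apply: MM_mdp; rewrite q0 q1.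
have Hdev : forall h, (h <= L)%N -> pi h sE a1 = 0 /\ pi h sT1 a1 = 0 /\ pi h sT0 a1 = 0.
  move=> h hl; have hH : (h < H)%N by lia.
  by split; [|split]; apply: (optimal_zero HM Hp Hopt) => //; apply: gap_dev_pos.
have Hmu := @mupol_valid R k L H k2.
have Hdevm : forall h, (h <= L)%N ->
    mupol k L h sE a1 = 0 /\ mupol k L h sT1 a1 = 0 /\ mupol k L h sT0 a1 = 0.
  by move=> h hl; rewrite /mupol /= hl !andbF /=.
move=> h hH s x.
rewrite /visit (@socc_occ R m L q H pi hLH Hp Hdev h hH) (@socc_occ R m L q H _ hLH Hmu Hdevm h hH).
have ki : 0 < k^-1 <= 1/2.
  rewrite invr_gt0 (lt_le_trans _ k2) //=.
  rewrite -[1/2]invf_div divr1 lef_pV2 ?posrE //; lra.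
have kk : 1 <= kap h * k^-1.
  rewrite -(divff (x := k)); last by apply/eqP; lra.
  by apply: ler_wpM2r; [rewrite invr_ge0; lra | exact: hk].
have kh : 2 <= kap h by apply: le_trans (hk h hH).
have := pol01 sR a0 Hp (leq_ltn_trans (leq0n h) hH).
set b := pi 0%N sR a0 => hb.
have hx := fun s x => pol01 s x Hp hH.
have kq : q * k^-1 <= q by apply: helpC => //; lra.
rewrite /occ /mupol.
clear Hopt HM Hmu Hdevm hk hLH Hp.
case: (h =P 0%N) => [e|e].
  subst h; have [d1 [d2 d3]] := Hdev 0%N (leq0n L).
  rewrite /d0q /=.
  move: s x; apply: ord5P; apply: ord2P => /=; rewrite ?d1 ?d2 ?d3 ?mul0r ?mulr0 ?mulr1 ?mul1r;
  try (have := hx sE a0); try (have := hx sR a0); try (have := hx sR a1); intros; try lra.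
  - by apply: helpD; [lra | case/andP: (hx sE a0) | lra].
  - have := @helpB R q 1 (pi 0%N sR a0) (kap 0%N) (k^-1) q0 _ (hx sR a0) kk.
    by rewrite mulr1; apply; lra.
  - have kk' : 1 <= kap 0%N * (1 - k^-1) by apply: helpE => //; lra.
    have := @helpB R q 1 (pi 0%N sR a1) (kap 0%N) (1 - k^-1) q0 _ (hx sR a1) kk'.
    by rewrite mulr1; apply; lra.
have hh : (h == 0%N) = false by apply/eqP.
rewrite /=.
case hl: (h <= L)%N.
  have [d1 [d2 d3]] := Hdev h hl.
  move: s x; apply: ord5P; apply: ord2P => /=; rewrite ?d1 ?d2 ?d3 ?mul0r ?mulr0 ?mulr1 ?mul1r;
  try (have := hx sE a0); try (have := hx sT1 a0); try (have := hx sT0 a0); case hm: m => /=; intros;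
  rewrite ?mul0r ?mulr0 ?mulr1 ?mul1r; try lra.
  1,2: apply: helpA => //; [apply: helpF; lra | apply: helpE => //].
  1,2: by apply: helpB.
move: s x; apply: ord5P; apply: ord2P => /=; rewrite ?mul0r ?mulr0 ?mulr1 ?mul1r;
  try (have := hx sE a0); try (have := hx sE a1); intros; lra.
Qed.

Lemma subopt_terms (R : realType) m L (q : R) H (pi : policy R 'I_5 'I_2) s :
  0 <= q <= 1 -> is_policy H pi ->
  0 <= d0 (MM m L q) s * (Vstar (MM m L q) H 0 s - Vpi (MM m L q) pi H 0 s).
Proof.
move=> hq Hp; have HM := MM_mdp m L H hq.
apply: mulr_ge0; first by case: HM => [[d0p _] _ _ _].
by rewrite subr_ge0; apply: (Vpi_le_Vstar HM Hp).
Qed.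

Lemma subopt_ge0 (R : realType) m L (q : R) H (pi : policy R 'I_5 'I_2) :
  0 <= q <= 1 -> is_policy H pi -> 0 <= SubOpt H (MM m L q) pi.
Proof. by move=> hq Hp; apply: sumr_ge0 => s _; apply: subopt_terms. Qed.

Lemma subopt_R (R : realType) m L (q : R) H (pi : policy R 'I_5 'I_2) :
  (2 * L + 2 <= H)%N -> 0 <= q <= 1 -> is_policy H pi ->
  q * \sum_x pi 0%N sR x * gap (MM m L q) H 0 sR x <= SubOpt H (MM m L q) pi.
Proof.
move=> hLH hq Hp; have HM := MM_mdp m L H hq.
rewrite /SubOpt sum5.
have := subopt_terms m L sE hq Hp; have := subopt_terms m L sT1 hq Hp.
have := subopt_terms m L sT0 hq Hp; have := subopt_terms m L sX hq Hp.
have : q * \sum_x pi 0%N sR x * gap (MM m L q) H 0 sR x <=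
       d0 (MM m L q) sR * (Vstar (MM m L q) H 0 sR - Vpi (MM m L q) pi H 0 sR).
  rewrite /= /d0q /=; apply: ler_wpM2l; first by case/andP: hq.
  have hH : (0 < H)%N by lia.
  by have := subopt_step HM Hp sR hH; rewrite subn0.
lra.
Qed.

Lemma subopt_sum (R : realType) L (q : R) H (pi : policy R 'I_5 'I_2) :
  (2 * L + 2 <= H)%N -> 0 <= q <= 1 -> is_policy H pi ->
  q * ((L%:R + 1) / 2) <= SubOpt H (MM true L q) pi + SubOpt H (MM false L q) pi.
Proof.
move=> hLH hq Hp.
have h1 := subopt_R true hLH hq Hp; have h2 := subopt_R false hLH hq Hp.
rewrite !sum2 !gap_R //= in h1 h2.
have hH : (0 < H)%N by lia.
have [_] := Hp 0%N hH sR; rewrite sum2 => hs.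
have e : q * ((L%:R + 1) / 2) = q * (pi 0%N sR a0 * ((L%:R + 1) / 2)) + q * (pi 0%N sR a1 * ((L%:R + 1) / 2)).
  by rewrite -mulrDr -mulrDl hs mul1r.
rewrite e; move: h1 h2; rewrite !mulr0 !add0r !addr0 => h1 h2; lra.
Qed.

Lemma rc_indep L h s x : ~~ [&& h == 0%N, s == sR & x == a0] -> rc true L h s x = rc false L h s x.
Proof.
move: s x; apply: ord5P; apply: ord2P => //= hn; rewrite /rc /=.
by move: hn; case: (h == 0%N).
Qed.

Lemma nxt_indep L h s x : ~~ [&& h == 0%N, s == sR & x == a0] -> nxt true L h s x = nxt false L h s x.
Proof.
move: s x; apply: ord5P; apply: ord2P => //= hn; rewrite /nxt /=.
by move: hn; case: (h == 0%N).
Qed.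

Lemma traj_eq (R : realType) n L (q : R) mu (tau : rawtraj n.+1 'I_5 'I_2 'I_3) :
  (tau ord0).1 != (sR, a0) ->
  traj_prob (MM true L q) mu tau = traj_prob (MM false L q) mu tau.
Proof.
move=> ht; rewrite !traj_chain; apply: eq_bigr => i _.
case: eqP => [e|e].
  have -> : i = ord0 by apply: val_inj.
  move: ht; case: (tau ord0) => [[s a] o] /= ht.
  rewrite /p0f /= rc_indep //; apply: contra ht => /and3P [_ /eqP -> /eqP ->] //.
rewrite /kf /= rc_indep //.
case: (i.-1 =P 0%N) => [e1|e1]; last by rewrite nxt_indep //; move/eqP/negbTE: e1 => ->.
have -> : prev_step i = ord0 by apply: val_inj.
rewrite nxt_indep //; apply: contra ht => /and3P [_ /eqP h1 /eqP h2].
by rewrite [(tau ord0).1]surjective_pairing h1 h2.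
Qed.

Lemma mupol_ge0 (R : realType) (k : R) L h s x : 2 <= k -> 0 <= mupol k L h s x.
Proof.
move=> k2; have H2 := @mupol_valid R k L h.+1 k2.
by have [p0 _] := H2 h (ltnSn h) s.
Qed.

Lemma traj_ge0 (R : realType) n m L (q : R) k (tau : rawtraj n.+1 'I_5 'I_2 'I_3) :
  0 <= q <= 1 -> 2 <= k -> 0 <= traj_prob (MM m L q) (mupol k L) tau.
Proof.
move=> hq k2; rewrite traj_chain; apply: prodr_ge0 => i _.
have HM := MM_mdp m L n.+1 hq.
case: HM => [[d0p _] _ _ _].
case: ifP => _; rewrite /p0f /kf; apply: mulr_ge0; try apply: mulr_ge0;
  rewrite ?ler0n ?mupol_ge0 //.
Qed.

Lemma p0_sum (R : realType) m L (q : R) k :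
  0 <= q <= 1 -> 2 <= k ->
  \sum_x ((x.1 != (sR, a0))%:R * p0f (MM m L q) (mupol k L) x) = 1 - q * k^-1.
Proof.
move=> hq k2.
rewrite (sum_pair (fun x : 'I_5 * 'I_2 * 'I_3 => _)) /=.
rewrite (sum_pair (fun sa : 'I_5 * 'I_2 => _)) /= sum5 !sum2.
have hind : forall t : 'I_3, \sum_o (o == t)%:R = 1 :> R by move=> t; case: (pt_dist R t).
have e : forall s x, \sum_o ((s, x) != (sR, a0))%:R * p0f (MM m L q) (mupol k L) (s, x, o)
   = ((s, x) != (sR, a0))%:R * d0q q s * mupol k L 0 s x.
  move=> s x; rewrite /p0f /=; under eq_bigr do rewrite mulrA.
  by rewrite -mulr_sumr hind mulr1 !mulrA.
rewrite !e /d0q /mupol /=; lra.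
Qed.

Lemma exp_lower (R : realType) n (K : nat) L (q k : R) (Alg : algo R K n.+1) :
  valid_algo Alg -> (2 * L + 2 <= n.+1)%N -> 0 <= q <= 1 -> 2 <= k ->
  q * ((L%:R + 1) / 2) * (1 - q * k^-1) ^+ K <=
  expected_subopt Alg (MM true L q) (@onehot R _ _) (mupol k L) +
  expected_subopt Alg (MM false L q) (@onehot R _ _) (mupol k L).
Proof.
move=> HA hLH hq k2.
set u1 := fun tau : rawtraj n.+1 'I_5 'I_2 'I_3 => (tau ord0).1 != (sR, a0).
set f := fun tau : rawtraj n.+1 'I_5 'I_2 'I_3 =>
  (u1 tau)%:R * traj_prob (MM true L q) (mupol k L) tau.
have hf : \sum_tau f tau = 1 - q * k^-1.
  rewrite /f /u1 (traj_sum (fun x => (x.1 != (sR, a0))%:R)).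
  - exact: p0_sum.
  - exact: MM_mdp.
  - exact: mupol_valid.
have -> : (1 - q * k^-1) ^+ K = \sum_(D : rawdata K n.+1 'I_5 'I_2 'I_3) \prod_t f (D t).
  rewrite -hf -(bigA_distr_bigA (fun (t : 'I_K) tau => f tau)) /=.
  by rewrite prodr_const card_ord.
rewrite mulrC mulr_suml /expected_subopt -big_split /=.
apply: ler_sum => D _.
set pi := Alg 5 2 _ (@onehot R _ _) (observe (MM true L q) D).
have Hpi : is_policy n.+1 pi by apply: HA.
have Hpi' : Alg 5 2 _ (@onehot R _ _) (observe (MM false L q) D) = pi by [].

have Pge0 : forall m, 0 <= data_prob (MM m L q) (mupol k L) D.
  by move=> m; apply: prodr_ge0 => t _; apply: traj_ge0.
have S1 := subopt_ge0 true L hq Hpi; have S2 := subopt_ge0 false L hq Hpi.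
case: (boolP [forall t, u1 (D t)]) => hall.
  have ePt : \prod_t f (D t) = data_prob (MM true L q) (mupol k L) D.
    apply: eq_bigr => t _; rewrite /f.
    by move/forallP: hall => /(_ t) ->; rewrite mul1r.
  have ePf : data_prob (MM false L q) (mupol k L) D = data_prob (MM true L q) (mupol k L) D.
    apply: eq_bigr => t _; rewrite traj_eq //.
    by move/forallP: hall => /(_ t).
  rewrite ePt ePf -mulrDr; apply: ler_wpM2l; first exact: Pge0.
  exact: subopt_sum.
have [t ht] : exists t, ~~ u1 (D t).
  by move/forallPn: hall => [t ht]; exists t.
rewrite (bigD1 t) //= {1}/f (negbTE ht) !mul0r.
by apply: addr_ge0; apply: mulr_ge0.
Qed.
Lemma helpG (R : realType) (k Hr D E K q : R) :
  0 <= k -> 0 <= Hr <= 6 * D -> 0 < D -> q * K = k / 2 -> 0 < K -> q * D / 4 <= E ->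
  1 / 288 * k * Hr ^+ 2 <= E * (K * D).
Proof.
move=> k0 hH D0 qK K0 hE.
have e : q * D / 4 * (K * D) = k * D ^+ 2 / 8.
  have ek : k = 2 * (q * K) by rewrite qK; field.
  by rewrite ek; field.
have h1 : q * D / 4 * (K * D) <= E * (K * D) by apply: ler_wpM2r => //; apply: mulr_ge0; lra.
have h2 : Hr ^+ 2 <= 36 * D ^+ 2 by rewrite !expr2; nra.
have h3 : 1 / 288 * k * Hr ^+ 2 <= k * D ^+ 2 / 8.
  have := ler_wpM2l k0 h2.
  lra.
lra.
Qed.

Unset Implicit Arguments.

Theorem theorem3 (R : realType) :
  exists c : R, 0 < c /\
  forall H : nat, (2 <= H)%N ->
  forall kappa : nat -> R, (forall h, (h < H)%N -> 2 <= kappa h) ->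
  exists K0 : nat, forall K : nat, (K0 <= K)%N ->
  forall Alg : algo R K H, valid_algo Alg ->
  exists (nS nA nO d : nat) (M : mdp R 'I_nS 'I_nA 'I_nO)
         (phi : nat -> 'I_nS -> 'I_nA -> 'rV[R]_d)
         (mu : policy R 'I_nS 'I_nA) (Dmin : R),
    [/\ is_linear_mdp H M phi /\ is_policy H mu,
        (forall pi : policy R 'I_nS 'I_nA, is_policy H pi -> is_optimal H M pi ->
           forall h, (h < H)%N -> forall s a,
             visit M pi h s a <= kappa h * visit M mu h s a),
        0 < Dmin,
        is_min_gap H M Dmin &
        c * kappa_min H kappa * (H%:R ^+ 2) / (K%:R * Dmin)
          <= expected_subopt Alg M phi mu].
Proof.
exists (1 / 288); split; first lra.
case=> [|[|H']] // _ kappa hk.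
set k := kappa_min H'.+2 kappa.
have k2 : 2 <= k.
  rewrite /k /kappa_min; elim/big_ind: _ => //; first exact: hk.
    by move=> x y hx hy; rewrite le_min hx hy.
  by move=> i _; apply: hk.
have kle : forall h, (h < H'.+2)%N -> k <= kappa h.
  by move=> h hh; rewrite /k /kappa_min; apply: (bigmin_le _ (Ordinal hh)).
exists (Num.trunc k).+1 => K hK Alg HA.
set L := (H' %/ 2)%N.
have hLH : (2 * L + 2 <= H'.+2)%N by rewrite /L; lia.
have hH3 : (H'.+2 <= 3 * (L + 1))%N by rewrite /L; lia.
have kK : k < K%:R.
  by apply: (lt_le_trans (truncnS_gt k)); rewrite ler_nat.
have K0 : 0 < K%:R :> R by apply: le_lt_trans kK; lra.
set q := k / (2 * K%:R).
have qk : q * k^-1 = 1 / (2 * K%:R).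
  rewrite /q; field; apply/andP; split; apply/eqP; lra.
have qK : q * K%:R = k / 2.
  rewrite /q; field; apply/eqP; lra.
have q0 : 0 <= q by rewrite /q divr_ge0 //; lra.
have q1 : q <= 1.
  rewrite /q ler_pdivrMr; lra.
have hq : 0 <= q <= 1 by rewrite q0 q1.
have qk2 : q * k^-1 <= 1/2.
  have K1 : 1 <= K%:R :> R by rewrite ler1n; lia.
  rewrite qk ler_pdivrMr; lra.
set Dmin := (L%:R + 1) / 2 : R.
have L0 : 0 <= L%:R :> R := ler0n _ _.
have D0 : 0 < Dmin by rewrite /Dmin; lra.
have hE := exp_lower HA hLH hq k2.
have bern : 1/2 <= (1 - q * k^-1) ^+ K.
  have e : K%:R * (1 / (2 * K%:R)) = 1/2 :> R by field; apply/eqP; lra.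
  apply: le_trans (bernoulli_ineq _ _); first by rewrite qk e; lra.
  rewrite qk divr_ge0 /=; [|lra|lra].
  by rewrite ler_pdivrMr; lra.
have hE2 : q * Dmin / 2 <= expected_subopt Alg (MM true L q) (@onehot R _ _) (mupol k L) +
  expected_subopt Alg (MM false L q) (@onehot R _ _) (mupol k L).
  have qD : 0 <= q * Dmin by apply: mulr_ge0; lra.
  apply: le_trans hE; rewrite -/Dmin; apply: ler_wpM2l => //.
  by rewrite mul1r in bern.
have fin : forall m, q * Dmin / 4 <=
    expected_subopt Alg (MM m L q) (@onehot R _ _) (mupol k L) ->
  exists (nS nA nO d : nat) (M : mdp R 'I_nS 'I_nA 'I_nO)
         (phi : nat -> 'I_nS -> 'I_nA -> 'rV[R]_d)
         (mu : policy R 'I_nS 'I_nA) (Dmin : R),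
    [/\ is_linear_mdp H'.+2 M phi /\ is_policy H'.+2 mu,
        (forall pi : policy R 'I_nS 'I_nA, is_policy H'.+2 pi -> is_optimal H'.+2 M pi ->
           forall h, (h < H'.+2)%N -> forall s a,
             visit M pi h s a <= kappa h * visit M mu h s a),
        0 < Dmin,
        is_min_gap H'.+2 M Dmin &
        1 / 288 * k * (H'.+2%:R ^+ 2) / (K%:R * Dmin)
          <= expected_subopt Alg M phi mu].
  move=> m hEm.
  exists 5%N, 2%N, 3%N, _, (MM m L q), (@onehot R _ _), (mupol k L), Dmin; split.
  - split; first by apply: tabular_linear; apply: MM_mdp.
    exact: mupol_valid.
  - move=> pi Hp Ho h hh s a.
    exact: (kappa_check hLH k2 kle q0 qk2 q1 Hp Ho hh).
  - exact: D0.
  - split.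
      exists 0%N, sR, (if m then a1 else a0); split => //.
      rewrite gap_R //; case hm: m => /=; rewrite -/Dmin; split=> //; apply/eqP; lra.
    move=> h s a hh g0.
    case: (@gap_cases R m L q H'.+2 h s a hLH hh) => [e|] //.
    by rewrite e eqxx in g0.
  - have HD : H'.+2%:R <= 6 * Dmin :> R.
      have : (H'.+2)%:R <= (3 * (L + 1))%:R :> R by rewrite ler_nat.
      rewrite natrM natrD /Dmin; lra.
    rewrite ler_pdivrMr; last by apply: mulr_gt0.
    apply: (@helpG R k _ Dmin _ K%:R q) => //; [lra | rewrite HD andbT //].
case: (lerP (q * Dmin / 4)
  (expected_subopt Alg (MM true L q) (@onehot R _ _) (mupol k L))) => hm.
  have X := fin true hm.
  exact X.
have hf : q * Dmin / 4 <=
    expected_subopt Alg (MM false L q) (@onehot R _ _) (mupol k L) by lra.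
have X := fin false hf.
exact X.
Qed.
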